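(* $\mathsf{AP}(R_1,R_2)=\mathsf{AP}(R_1,R_3)=\mathsf{C}$.
   Context: Tuples in $\{0,1\}^4$ are written as strings $abcd$. The relations $R_1,\dots,R_5\subseteq\{0,1\}^4$ are $R_1=\{0000,1000,0100,1100,1010,0110,1001,0101,0011,1011,0111,1111\}$, $R_2=\{0000,1000,0100,1100,1010,0101,0011,1111\}$, $R_3=\{0000,1100,1010,0101,0011,1011,0111,1111\}$, $R_4=\{0000,1100,1010,0101,0011,1111\}$, $R_5=\{0000,1100,1010,0110,1001,0101,0011,1111\}$. For $R,S\subseteq\{0,1\}^4$, a Boolean function $f\colon\{0,1\}^n\to\{0,1\}$ is analogy-preserving relative to $(R,S)$ if for all $\mathbf{a},\mathbf{b},\mathbf{c},\mathbf{d}\in\{0,1\}^n$ with $(a_i,b_i,c_i,d_i)\in R$ for every $i$ and such that $(f(\mathbf{a}),f(\mathbf{b}),f(\mathbf{c}),x)\in S$ for some $x\in\{0,1\}$, we have $(f(\mathbf{a}),f(\mathbf{b}),f(\mathbf{c}),f(\mathbf{d}))\in S$; $\mathsf{AP}(R,S)$ is the set of all such functions of all arities. $\mathsf{C}$ is the set of all constant Boolean functions (of all arities). *)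

(* Defs.v *)
From mathcomp Require Import all_boot.
Set Implicit Arguments. Unset Strict Implicit. Unset Printing Implicit Defensive.

Definition bits4 := (bool * bool * bool * bool)%type.
Definition q (a b c d : nat) : bits4 := (a == 1, b == 1, c == 1, d == 1).

Definition R1 : seq bits4 :=
  [:: q 0 0 0 0; q 1 0 0 0; q 0 1 0 0; q 1 1 0 0; q 1 0 1 0; q 0 1 1 0;
      q 1 0 0 1; q 0 1 0 1; q 0 0 1 1; q 1 0 1 1; q 0 1 1 1; q 1 1 1 1].
Definition R2 : seq bits4 :=
  [:: q 0 0 0 0; q 1 0 0 0; q 0 1 0 0; q 1 1 0 0; q 1 0 1 0; q 0 1 0 1;
      q 0 0 1 1; q 1 1 1 1].
Definition R3 : seq bits4 :=
  [:: q 0 0 0 0; q 1 1 0 0; q 1 0 1 0; q 0 1 0 1; q 0 0 1 1; q 1 0 1 1;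
      q 0 1 1 1; q 1 1 1 1].
Definition R4 : seq bits4 :=
  [:: q 0 0 0 0; q 1 1 0 0; q 1 0 1 0; q 0 1 0 1; q 0 0 1 1; q 1 1 1 1].
Definition R5 : seq bits4 :=
  [:: q 0 0 0 0; q 1 1 0 0; q 1 0 1 0; q 0 1 1 0; q 1 0 0 1; q 0 1 0 1;
      q 0 0 1 1; q 1 1 1 1].

Definition boolfun (n : nat) := ('I_n -> bool) -> bool.

Definition AP (R S : seq bits4) (n : nat) (f : boolfun n) : Prop :=
  forall a b c d : 'I_n -> bool,
    (forall i : 'I_n, (a i, b i, c i, d i) \in R) ->
    (exists x : bool, (f a, f b, f c, x) \in S) ->
    (f a, f b, f c, f d) \in S.

(* f belongs to C: f is constant *)
Definition is_const (n : nat) (f : boolfun n) : Prop :=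
  exists v : bool, forall x : 'I_n -> bool, f x = v.

(* Main.v *)
Require Import Defs.
From mathcomp Require Import all_boot.

Lemma key (S : seq bits4) n (f : boolfun n) (b : bool) :
  AP R1 S f -> (b, ~~ b, ~~ b, b) \notin S ->
  (exists x, (b, ~~ b, ~~ b, x) \in S) ->
  forall u v, f u = b -> f v = ~~ b -> False.
Proof.
move=> H nS eS u v fu fv.
have Hc : forall i, (u i, v i, v i, u i) \in R1.
  by move=> i; case: (u i); case: (v i).
have := H u v v u Hc.
by rewrite fu fv (negbTE nS) => /(_ eS).
Qed.

Lemma main_gen (S : seq bits4) n (f : boolfun n) (b : bool) :
  (b, ~~ b, ~~ b, b) \notin S ->
  (exists x, (b, ~~ b, ~~ b, x) \in S) ->
  q 0 0 0 0 \in S -> q 1 1 1 1 \in S ->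
  (AP R1 S f <-> is_const f).
Proof.
move=> nS eS h0 h1; split.
- move=> H; exists (f (fun _ => false)) => x.
  have K := @key S n f b H nS eS.
  case hx: (f x); case hy: (f (fun _ => false)) => //; case: b K {nS eS} => K.
  + by case: (K _ _ hx hy).
  + by case: (K _ _ hy hx).
  + by case: (K _ _ hy hx).
  + by case: (K _ _ hx hy).
- move=> [v Hv] a b' c d _ _; rewrite !Hv.
  by case: v Hv.
Qed.

Theorem mainTheorem12 :
  forall (n : nat) (f : boolfun n),
    (AP R1 R2 f <-> is_const f) /\ (AP R1 R3 f <-> is_const f).
Proof.
move=> n f; split.
- apply: (@main_gen _ _ _ true) => //; by exists false.
- apply: (@main_gen _ _ _ false) => //; by exists true.
Qed.
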